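(* Let $f:[0,1]^d\to\mathbb{R}$ be DR submodular. Let $y:[0,1]\to[0,1]^d$ be coordinatewise non-decreasing, i.e., $y(\mu)\le y(\mu')$ coordinatewise whenever $0\le\mu<\mu'\le1$. Then \[ \int_0^1 f(y(\mu))\,d\mu\le f\Big(\int_0^1y(\mu)\,d\mu\Big). \]
   Context: A smooth (twice continuously differentiable) function $f:[0,1]^d\to\mathbb{R}$ is diminishing-returns (DR) submodular if $\partial_{ij}f(x)\le0$ for all $i,j\in[d]$ and all $x\in[0,1]^d$. *)

(* Defs.v *)
From HB Require Import structures.
From mathcomp Require Import all_boot all_order all_algebra.
From mathcomp Require Import all_classical all_reals all_analysis.
Set Implicit Arguments. Unset Strict Implicit. Unset Printing Implicit Defensive.
Import Order.TTheory GRing.Theory Num.Theory.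
Import numFieldNormedType.Exports.
Local Open Scope classical_set_scope.
Local Open Scope ring_scope.

Section Defs.
Context {R : realType} {d : nat}.

Definition basis_vec (i : 'I_d) : 'rV[R]_d := delta_mx 0 i.

Definition partial (i : 'I_d) (g : 'rV[R]_d -> R) : 'rV[R]_d -> R :=
  fun x => 'D_(basis_vec i) g x.

Definition in_cube (x : 'rV[R]_d) : Prop := forall i, 0 <= x 0 i <= 1.

Definition twice_cont_diff (f : 'rV[R]_d -> R) : Prop :=
  (forall x, differentiable f x) /\
  (forall i x, differentiable (partial i f) x) /\
  (forall i j, continuous (partial j (partial i f))).

Definition DR_submodular (f : 'rV[R]_d -> R) : Prop :=
  twice_cont_diff f /\
  forall i j x, in_cube x -> partial j (partial i f) x <= 0.

Definition coord_nondecr (y : R -> 'rV[R]_d) : Prop :=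
  forall mu mu' : R, 0 <= mu -> mu < mu' -> mu' <= 1 ->
    forall i, y mu 0 i <= y mu' 0 i.

Definition vec_integral01 (y : R -> 'rV[R]_d) : 'rV[R]_d :=
  \row_i Rintegral lebesgue_measure `[0%R, 1%R] (fun mu => y mu 0 i).

End Defs.

(* Main.v *)
Require Import Defs.
From HB Require Import structures.
From mathcomp Require Import all_boot all_order all_algebra.
From mathcomp Require Import all_classical all_reals all_analysis.
From mathcomp Require Import lra measurable_realfun.
Import Order.TTheory GRing.Theory Num.Theory.
Import numFieldNormedType.Exports.
Local Open Scope classical_set_scope.
Local Open Scope ring_scope.

Section Gen.
Context {R : realType}.

Lemma bnd_of (h : R -> R) (B : R) (A : set R) :
  (forall x, A x -> `|h x| <= B) -> [bounded h x | x in A].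
Proof.
move=> hB; rewrite /bounded_near; near=> M => x Ax /=.
apply: le_trans (hB x Ax) _; near: M; exact: nbhs_pinfty_ge (num_real _).
Unshelve. all: end_near. Qed.

Definition clamp (x : R) : R := Num.max 0 (Num.min x 1).

Lemma clamp_id x : 0 <= x <= 1 -> clamp x = x.
Proof. by case/andP=> h0 h1; rewrite /clamp (min_l h1) (max_r h0). Qed.

Lemma clamp_in x : 0 <= clamp x <= 1.
Proof. rewrite /clamp le_max lexx /= ge_max ler01 /= ge_min lexx orbT. by []. Qed.

Lemma clamp_mono x y : x <= y -> clamp x <= clamp y.
Proof. by move=> xy; rewrite /clamp le_max2// le_min2. Qed.

Lemma mono01_measurable (h : R -> R) :
  (forall s t, 0 <= s -> s <= t -> t <= 1 -> h s <= h t) ->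
  measurable_fun (`[0%R, 1%R] : set R) h.
Proof.
move=> hm.
apply: (@eq_measurable_fun _ _ _ _ _ (h \o clamp)).
  move=> x; rewrite inE /= in_itv /= => /clamp_id ->; by [].
apply: nondecreasing_measurable => // s t st /=.
have := clamp_in s; have := clamp_in t; case/andP=> ? ?; case/andP=> ? ?.
by apply: hm => //; exact: clamp_mono.
Qed.

Lemma leb01 : (lebesgue_measure (`[0%R, 1%R] : set R) = 1%E).
Proof. by rewrite lebesgue_measure_itv /= lte_fin ltr01 oppr0 adde0. Qed.

Lemma int01 (h : R -> R) (B : R) :
  measurable_fun (`[0%R, 1%R] : set R) h -> (forall x, 0 <= x <= 1 -> `|h x| <= B) ->
  lebesgue_measure.-integrable `[0%R, 1%R] (EFin \o h).
Proof.
move=> mh hB; apply: measurable_bounded_integrable => //.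
  by move: leb01 => /= ->; rewrite ltry.
apply: (bnd_of h B) => x /=; rewrite in_itv /=; exact: hB.
Qed.

Lemma Rint_cst01 (c : R) : Rintegral lebesgue_measure `[0%R, 1%R] (fun _ => c) = c.
Proof. rewrite Rintegral_cst //; move: leb01 => /= ->; by rewrite mulr1. Qed.


Lemma anti01_measurable (h : R -> R) :
  (forall s t, 0 <= s -> s <= t -> t <= 1 -> h t <= h s) ->
  measurable_fun (`[0%R, 1%R] : set R) h.
Proof.
move=> hm.
have mN : measurable_fun (`[0%R, 1%R] : set R) (fun x => - h x).
  by apply: mono01_measurable => s t s0 st t1; rewrite lerN2 hm.
apply: (@eq_measurable_fun _ _ _ _ _ (fun x => - - h x)).
  by move=> x _; rewrite opprK.
exact: measurable_funN.
Qed.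

Notation I01 := (Rintegral lebesgue_measure (`[0%R, 1%R] : set R)).

Lemma cheb (D w : R -> R) (B : R) :
  (forall s t, 0 <= s -> s <= t -> t <= 1 -> D t <= D s) ->
  (forall s t, 0 <= s -> s <= t -> t <= 1 -> w s <= w t) ->
  (forall x, 0 <= x <= 1 -> `|D x| <= B) ->
  (forall x, 0 <= x <= 1 -> `|w x| <= B) ->
  I01 w = 0 -> I01 (fun x => D x * w x) <= 0.
Proof.
move=> Dm wm DB wB w0.
have [K HK] : exists K, forall x, 0 <= x <= 1 -> (D x - K) * w x <= 0.
  case: (pselect (exists x, 0 <= x <= 1 /\ 0 < w x)) => [[x0 [x0i wx0]]|nT].
    pose T := [set D x | x in [set x | 0 <= x <= 1 /\ 0 < w x]].
    have Tne : T !=set0 by exists (D x0); exists x0.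
    have hsT : has_sup T.
      split => //; exists B => _ [x [xi _] <-].
      exact: le_trans (ler_norm _) (DB x xi).
    exists (sup T) => x xi.
    have [wneg|wpos|->] := ltgtP (w x) 0; last by rewrite mulr0.
    - have : sup T <= D x.
        apply: ge_sup => //.
        move=> _ [z [zi wz] <-].
        case/andP: xi => x0' x1; case/andP: zi => z0 z1.
        have [xz|zx] := leP x z; first exact: Dm.
        have := wm z x z0 (ltW zx) x1; lra.
      move=> h; nra.
    - have : D x <= sup T by apply: sup_upper_bound => //; exists x.
      move=> h; nra.
  exists (- B) => x xi.
  have wle : w x <= 0.
    rewrite leNgt; apply/negP => wp; apply: nT; by exists x.
  have := DB x xi; rewrite ler_norml => /andP[h1 h2]; nra.
have mD := anti01_measurable D Dm.
have mw := mono01_measurable w wm.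
have iw : lebesgue_measure.-integrable (`[0%R, 1%R] : set R) (EFin \o w).
  exact: (int01 w B mw wB).
have iKw : lebesgue_measure.-integrable (`[0%R, 1%R] : set R)
    (EFin \o (fun x => (D x - K) * w x)).
  apply: (int01 _ ((B + `|K|) * B)).
    apply: measurable_funM => //; apply: measurable_funB => //.
  move=> x xi; rewrite normrM ler_pM //; last exact: wB.
  by rewrite (le_trans (ler_normB _ _)) // lerD2r DB.
have -> : I01 (fun x => D x * w x) =
    I01 (fun x => (D x - K) * w x + K * w x).
  by apply: eq_Rintegral => x _; rewrite mulrBl subrK.
rewrite RintegralD //; last first.
  apply: (int01 _ (`|K| * B)).
    exact: measurable_funM.
  by move=> x xi; rewrite normrM ler_pM // wB.
rewrite RintegralZl // w0 mulr0 addr0.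
rewrite -[X in _ <= X](Rint_cst01 0).
apply: le_Rintegral => //.
  by apply: (int01 _ 0) => // x _; rewrite normr0.
Qed.

End Gen.
Section Ana.
Context {R : realType} {d : nat}.
Implicit Types (g : 'rV[R]_d -> R) (a w x : 'rV[R]_d).

Lemma line_deriv g a w (t : R) :
  derivable g (a + t *: w) w ->
  is_derive t 1 (fun s => g (a + s *: w)) ('D_w g (a + t *: w)).
Proof.
have E : (fun h : R => h^-1 *: (((fun s => g (a + s *: w)) \o shift t) (h *: 1)
            - g (a + t *: w))) =
         (fun h => h^-1 *: ((g \o shift (a + t *: w)) (h *: w) - g (a + t *: w))).
  apply/funext => h /=; congr (_ *: (g _ - _)).
  rewrite -[h *: 1]/(h * 1) mulr1 scalerDl.
  by rewrite addrCA addrA.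
move=> dg.
have dphi : derivable (fun s : R => g (a + s *: w)) t 1 by rewrite /derivable E.
apply: DeriveDef => //.
by rewrite /derive E.
Qed.

Lemma dir_sum g x w : differentiable g x ->
  'D_w g x = \sum_j w 0 j * partial j g x.
Proof.
move=> dg; rewrite deriveE // {1}(row_sum_delta w) linear_sum.
apply: eq_bigr => j _; rewrite linearZ /= /partial deriveE //.
Qed.

Lemma dir_basis g x k c : differentiable g x ->
  'D_(c *: basis_vec k) g x = c * partial k g x.
Proof.
by move=> dg; rewrite deriveE // linearZ /= /partial deriveE.
Qed.

Lemma cube_comb a b t : in_cube a -> in_cube b -> 0 <= t <= 1 ->
  in_cube (a + t *: (b - a)).
Proof.
move=> ha hb /andP[t0 t1] i; rewrite !mxE.
have /andP[? ?] := ha i; have /andP[? ?] := hb i.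
apply/andP; split; nra.
Qed.


Section DR.
Variable f : 'rV[R]_d -> R.
Variable hf : DR_submodular f.

Let df x : differentiable f x. Proof. by case: hf => [[h _] _]. Qed.
Let dpf i x : differentiable (partial i f) x. Proof. by case: hf => [[_ [h _]] _]. Qed.
Let Hneg i j x : in_cube x -> partial j (partial i f) x <= 0.
Proof. by case: hf => _ h; exact: h. Qed.

Definition leV (a b : 'rV[R]_d) := forall i, a 0 i <= b 0 i.

Lemma grad_anti k (a b : 'rV[R]_d) : in_cube a -> in_cube b -> leV a b ->
  partial k f b <= partial k f a.
Proof.
move=> ha hb hab.
pose phi := fun s : R => partial k f (a + s *: (b - a)).
have hd (s : R) : is_derive s 1 phi ('D_(b - a) (partial k f) (a + s *: (b - a))).
  exact/line_deriv/diff_derivable/dpf.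
have : phi 1 <= phi 0.
  apply: (@ler0_derive1_le_cc R phi 0 1).
  - by move=> s _; case: (hd s).
  - move=> s; rewrite in_itv /= => /andP[s0 s1].
    rewrite derive1E; case: (hd s) => _ ->.
    rewrite dir_sum //; apply: sumr_le0 => j _.
    rewrite mulr_ge0_le0 //; first by rewrite !mxE subr_ge0.
    apply: Hneg; apply: cube_comb => //; rewrite !ltW //.
  - apply: derivable_within_continuous => s _; by case: (hd s).
  - by rewrite in_itv /= lexx ler01.
  - by rewrite in_itv /= lexx ler01.
  - exact: ler01.
by rewrite /phi scale1r scale0r addr0 addrC subrK.
Qed.


Lemma coord_concave k (p q : 'rV[R]_d) : in_cube p -> in_cube q ->
  (forall i, i != k -> q 0 i = p 0 i) ->
  f q <= f p + partial k f p * (q 0 k - p 0 k).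
Proof.
move=> hp hq hpq.
set del := q 0 k - p 0 k.
have hw : q - p = del *: basis_vec k.
  apply/rowP => i; rewrite !mxE /=.
  have [->|ik] := eqVneq i k; first by rewrite mulr1.
  by rewrite hpq // subrr mulr0.
pose phi := fun s : R => f (p + s *: (q - p)).
have hd (s : R) : is_derive s 1 phi ('D_(q - p) f (p + s *: (q - p))).
  exact/line_deriv/diff_derivable/df.
have [c cin hc] : exists2 c, c \in `[0, 1]%R & phi 1 - phi 0 =
     'D_(q - p) f (p + c *: (q - p)) * (1 - 0).
  apply: MVT_segment; first exact: ler01.
  apply: derivable_within_continuous => s _; by case: (hd s).
move: cin; rewrite in_itv /= => /andP[c0 c1].
move: hc; rewrite /phi scale1r scale0r addr0 [p + (q - p)]addrC subrK subr0 mulr1.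
set pc := p + c *: (q - p) => hc.
have hD : derive f pc (q - p) = del * partial k f pc by rewrite hw dir_basis.
rewrite hD in hc.
have pcc : in_cube pc by apply: cube_comb => //; rewrite c0 c1.
have pce i : pc 0 i = p 0 i + c * (del * (i == k)%:R).
  have := congr1 (fun M : 'rV[R]_d => M 0 i) hw; rewrite /pc !mxE eqxx /= => ->; by [].
have [dpos|dneg] := leP 0 del.
  have : partial k f pc <= partial k f p.
    apply: grad_anti => // i; rewrite pce.
    by rewrite lerDl mulr_ge0 // mulr_ge0.
  move=> h; nra.
have : partial k f p <= partial k f pc.
  apply: grad_anti => // i; rewrite pce.
  rewrite gerDl mulr_ge0_le0 // mulr_le0_ge0 //; exact: ltW.
move=> h; nra.
Qed.

Definition Lc (j : 'I_d) := `|partial j f 0| + `|partial j f (const_mx 1)|.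

Lemma cube0 : in_cube (0 : 'rV[R]_d).
Proof. by move=> i; rewrite mxE lexx ler01. Qed.

Lemma cube1 : in_cube (const_mx 1 : 'rV[R]_d).
Proof. by move=> i; rewrite mxE lexx ler01. Qed.

Lemma grad_bound j x : in_cube x -> `|partial j f x| <= Lc j.
Proof.
move=> hx.
have h1 : partial j f x <= partial j f 0.
  by apply: grad_anti => //; [exact: cube0| move=> i; rewrite mxE; case/andP: (hx i)].
have h2 : partial j f (const_mx 1) <= partial j f x.
  by apply: grad_anti => //; [exact: cube1| move=> i; rewrite mxE; case/andP: (hx i)].
have nb : - partial j f (const_mx 1) <= `|partial j f (const_mx 1)|.
  by rewrite -normrN ler_norm.
have pa := ler_norm (partial j f 0).
have := normr_ge0 (partial j f 0); have := normr_ge0 (partial j f (const_mx 1)).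
rewrite /Lc ler_norml => ? ?; apply/andP; split; lra.
Qed.

Lemma chain_lip (a b : 'rV[R]_d) : in_cube a -> in_cube b -> leV a b ->
  `|f b - f a| <= \sum_j Lc j * (b 0 j - a 0 j).
Proof.
move=> ha hb hab.
pose phi := fun s : R => f (a + s *: (b - a)).
have hd (s : R) : is_derive s 1 phi ('D_(b - a) f (a + s *: (b - a))).
  exact/line_deriv/diff_derivable/df.
have [c cin hc] : exists2 c, c \in `[0, 1]%R & phi 1 - phi 0 =
     'D_(b - a) f (a + c *: (b - a)) * (1 - 0).
  apply: MVT_segment; first exact: ler01.
  apply: derivable_within_continuous => s _; by case: (hd s).
move: cin; rewrite in_itv /= => /andP[c0 c1].
move: hc; rewrite /phi scale1r scale0r addr0 [a + (b - a)]addrC subrK subr0 mulr1.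
rewrite dir_sum // => ->.
apply: le_trans (ler_norm_sum _ _ _) _.
apply: ler_sum => j _; rewrite normrM !mxE [`|b 0 j - a 0 j|]ger0_norm ?subr_ge0 // mulrC.
apply: ler_wpM2r; first by rewrite subr_ge0.
by apply: grad_bound; apply: cube_comb => //; rewrite c0 c1.
Qed.


Lemma Lc_ge0 j : 0 <= Lc j.
Proof. by rewrite /Lc addr_ge0. Qed.

Section Chain.
Variable z : R -> 'rV[R]_d.
Variable hz : forall mu : R, 0 <= mu <= 1 -> in_cube (z mu).
Variable mz : coord_nondecr z.

Lemma chain_le (s t : R) : 0 <= s -> s <= t -> t <= 1 -> leV (z s) (z t).
Proof.
move=> s0 st t1 i; move: st; rewrite le_eqVlt => /predU1P[->//|st].
exact: mz.
Qed.

Lemma fz_meas : measurable_fun (`[0%R, 1%R] : set R) (fun mu => f (z mu)).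
Proof.
pose V := fun mu => \sum_j Lc j * z mu 0 j.
have mV : measurable_fun (`[0%R, 1%R] : set R) V.
  apply: mono01_measurable => s t s0 st t1.
  apply: ler_sum => j _; apply: ler_wpM2l; first exact: Lc_ge0.
  exact: chain_le.
have mG : measurable_fun (`[0%R, 1%R] : set R) (fun mu => V mu - f (z mu)).
  apply: mono01_measurable => s t s0 st t1.
  have hs : in_cube (z s) by apply: hz; rewrite s0 (le_trans st t1).
  have ht : in_cube (z t) by apply: hz; rewrite t1 (le_trans s0 st).
  have := chain_lip (z s) (z t) hs ht (chain_le s t s0 st t1).
  have -> : \sum_j Lc j * (z t 0 j - z s 0 j) = V t - V s.
    by rewrite /V -sumrB; apply: eq_bigr => j _; rewrite mulrBr.
  have := ler_norm (f (z t) - f (z s)); lra.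
apply: (@eq_measurable_fun _ _ _ _ _ (fun mu => V mu - (V mu - f (z mu)))).
  by move=> x _; rewrite subKr.
exact: measurable_funB.
Qed.

Definition fB := `|f 0| + \sum_j Lc j.

Lemma fz_bound mu : 0 <= mu <= 1 -> `|f (z mu)| <= fB.
Proof.
move=> hmu; have hc := hz mu hmu.
have := chain_lip 0 (z mu) cube0 hc (fun i => ltac:(rewrite mxE; case/andP: (hc i) => //)).
move=> h.
have h2 : \sum_j Lc j * (z mu 0 j - (0 : 'rV[R]_d) 0 j) <= \sum_j Lc j.
  apply: ler_sum => j _; rewrite mxE subr0.
  have /andP[_ h1] := hc j.
  by rewrite -[X in _ <= X]mulr1 ler_wpM2l // Lc_ge0.
have := ler_normD (f (z mu) - f 0) (f 0); rewrite subrK.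
rewrite /fB; lra.
Qed.

Lemma fz_int : lebesgue_measure.-integrable (`[0%R, 1%R] : set R)
   (EFin \o (fun mu => f (z mu))).
Proof. exact: (int01 _ fB fz_meas fz_bound). Qed.

Lemma Dz_anti k (s t : R) : 0 <= s -> s <= t -> t <= 1 ->
  partial k f (z t) <= partial k f (z s).
Proof.
move=> s0 st t1; apply: grad_anti; last exact: chain_le.
  by apply: hz; rewrite s0 (le_trans st t1).
by apply: hz; rewrite t1 (le_trans s0 st).
Qed.

End Chain.

End DR.
End Ana.
Theorem mainTheorem9 (R : realType) (d : nat) (f : 'rV[R]_d -> R)
  (y : R -> 'rV[R]_d) :
  DR_submodular f ->
  (forall mu : R, 0 <= mu <= 1 -> in_cube (y mu)) ->
  coord_nondecr y ->
  Rintegral lebesgue_measure `[0%R, 1%R] (fun mu => f (y mu))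
    <= f (vec_integral01 y).
Proof.
move=> hf hy my.
set yb := vec_integral01 y.
have ymono i : forall s t : R, 0 <= s -> s <= t -> t <= 1 -> y s 0 i <= y t 0 i.
  by move=> s t s0 st t1; exact: (chain_le y my s t s0 st t1 i).
have ybd i mu : 0 <= mu <= 1 -> `|y mu 0 i| <= 1.
  move=> hmu; have /andP[h0 h1] := hy mu hmu i; by rewrite ger0_norm.
have yint i : lebesgue_measure.-integrable (`[0%R, 1%R] : set R)
    (EFin \o (fun mu => y mu 0 i)).
  exact: (int01 _ 1 (mono01_measurable _ (ymono i)) (ybd i)).
have ybE i : yb 0 i = Rintegral lebesgue_measure (`[0%R, 1%R] : set R)
    (fun mu => y mu 0 i) by rewrite /yb /vec_integral01 mxE.
have ybc : in_cube yb.
  move=> i; rewrite ybE; apply/andP; split.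
    apply: Rintegral_ge0 => x; rewrite /= in_itv /= => hx.
    by have /andP[] := hy x hx i.
  rewrite -[X in _ <= X](Rint_cst01 1); apply: le_Rintegral => //.
    by apply: (int01 _ 1) => // x _; rewrite normr1.
  move=> x; rewrite /= in_itv /= => hx.
  by have /andP[] := hy x hx i.
pose yk (k : nat) (mu : R) : 'rV[R]_d :=
  \row_i (if (i < k)%N then yb 0 i else y mu 0 i).
have ykc k mu : 0 <= mu <= 1 -> in_cube (yk k mu).
  move=> hmu i; rewrite mxE; case: ifP => _; [exact: ybc | exact: hy].
have ykm k : coord_nondecr (yk k).
  move=> s t s0 st t1 i; rewrite !mxE; case: ifP => _ //.
  exact: my.
have main : forall k, (k <= d)%N ->
    Rintegral lebesgue_measure `[0%R, 1%R] (fun mu => f (y mu)) <=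
    Rintegral lebesgue_measure `[0%R, 1%R] (fun mu => f (yk k mu)).
  elim=> [_|k IH kd].
    rewrite le_eqVlt; apply/orP; left; apply/eqP; apply: eq_Rintegral => mu _; congr f.
    by apply/rowP => i; rewrite mxE ltn0.
  have kd' : (k < d)%N by [].
  apply: (le_trans (IH (ltnW kd))).
  pose i0 : 'I_d := Ordinal kd'.
  pose D := fun mu => partial i0 f (yk k.+1 mu).
  pose w := fun mu => y mu 0 i0 - yb 0 i0.
  have hpt mu : 0 <= mu <= 1 -> f (yk k mu) <= f (yk k.+1 mu) + D mu * w mu.
    move=> hmu.
    have := coord_concave _ hf i0 _ _ (ykc k.+1 mu hmu) (ykc k mu hmu).
    rewrite /D /w !mxE /= ltnn ltnSn; apply.
    move=> i ii0; rewrite !mxE ltnS [(i <= k)%N]leq_eqVlt.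
    have -> : (val i == k) = false.
      by apply/negP => /eqP hik; move/eqP: ii0; apply; apply: val_inj.
    by [].
  have Dm : forall s t : R, 0 <= s -> s <= t -> t <= 1 -> D t <= D s.
    by move=> s t s0 st t1; exact: (Dz_anti _ hf _ (ykc k.+1) (ykm k.+1) i0 s t s0 st t1).
  have wm : forall s t : R, 0 <= s -> s <= t -> t <= 1 -> w s <= w t.
    by move=> s t s0 st t1; rewrite /w lerD2r; apply: ymono.
  pose B := Lc f i0 + 2.
  have LB : 0 <= Lc f i0 by exact: Lc_ge0.
  have DB x : 0 <= x <= 1 -> `|D x| <= B.
    move=> hx; have := grad_bound _ hf i0 _ (ykc k.+1 x hx); rewrite -/(D x).
    rewrite /B; lra.
  have wB x : 0 <= x <= 1 -> `|w x| <= B.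
    move=> hx; rewrite /w; apply: le_trans (ler_normB _ _) _.
    have := ybd i0 x hx.
    have /andP[h0 h1] := ybc i0; rewrite [`|yb 0 i0|]ger0_norm //.
    rewrite /B; lra.
  have w0 : Rintegral lebesgue_measure (`[0%R, 1%R] : set R) w = 0.
    rewrite /w RintegralB //; last by apply: (int01 _ `|yb 0 i0|) => // x _.
    by rewrite Rint_cst01 ybE subrr.
  have mDw : measurable_fun (`[0%R, 1%R] : set R) (fun mu => D mu * w mu).
    apply: measurable_funM; [exact: anti01_measurable D Dm | exact: mono01_measurable w wm].
  have iDw : lebesgue_measure.-integrable (`[0%R, 1%R] : set R)
      (EFin \o (fun mu => D mu * w mu)).
    apply: (int01 _ (B * B)); first exact: mDw.
    by move=> x hx; rewrite normrM ler_pM // ?DB ?wB.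
  apply: (@le_trans _ _ (Rintegral lebesgue_measure `[0%R, 1%R]
            (fun mu => f (yk k.+1 mu) + D mu * w mu))).
    apply: le_Rintegral => //.
    - exact: (fz_int _ hf _ (ykc k) (ykm k)).
    - apply: (int01 _ (fB f + B * B)).
        apply: measurable_funD => //; exact: (fz_meas _ hf _ (ykc k.+1) (ykm k.+1)).
      move=> x hx; apply: le_trans (ler_normD _ _) _; apply: lerD.
        exact: (fz_bound _ hf _ (ykc k.+1) x hx).
      by rewrite normrM ler_pM // ?DB ?wB.
  rewrite RintegralD //; last exact: (fz_int _ hf _ (ykc k.+1) (ykm k.+1)).
  rewrite -[X in _ <= X]addr0 lerD2l.
  exact: (cheb D w B Dm wm DB wB w0).
apply: (le_trans (main d (leqnn d))).
rewrite le_eqVlt; apply/orP; left; apply/eqP; rewrite -(Rint_cst01 (f yb)); apply: eq_Rintegral => mu _.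
by congr f; apply/rowP => i; rewrite mxE ltn_ord.
Qed.
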